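(* Consider an execution of Algorithm 1 with choose_leader given by Algorithm 2 (Carousel). Let $r'$ be a round after GST such that the parties $(r' \bmod n)$ and $(r'+1 \bmod n)$ are honest, and let $r\le r'$. Suppose $f$ blocks with round numbers in $[r,r')$ and with pairwise different Byzantine authors are committed. Then for any block $B$ with round number $r'$ or $r'+1$ that is immediately committed, there is an honest block with round number in $[r,r'+1]$ on $B$'s implied chain.
   Context: System model: $n$ parties $\Pi=\{p_1,\dots,p_n\}$ (party $(j \bmod n)$ denotes the round-robin party indexed by $j$), at most $f<n/3$ faulty. A party is crashed if it halts prematurely; Byzantine if it deviates from the protocol arbitrarily; honest if neither. Non-Byzantine parties follow the protocol until they (possibly) crash. Communication is eventually synchronous: there is an unknown global stabilization time (GST) after which every message arrives within a known bound $\delta$. Blocks: a block contains transactions, a link to a parent block (implied chain back to genesis), a round number, an author id, and a certificate from which a set of $2f+1$ endorsing parties can be obtained. certified$(B,r)$ is a local predicate saying $B$ has a valid certificate ($2f+1$ endorsements) for round $r$. $B\longrightarrow B'$ means $B$ is on $B'$'s implied chain. An honest (resp. Byzantine) block is one authored by an honest (resp. Byzantine) party. A block is committed if some honest party commits it; a block $B$ with round number $r$ is immediately committed if some honest party commits $B$ in round $r$ (in its handler for new_round$(r)$). LBR abstraction: each party can invoke $LBR(r,\ell)$; non-Byzantine parties endorse a block with round $r$ and author $\ell$ only by calling $LBR(r,\ell)$. Every invocation returns within $\Delta_l>c\delta$ time ($c$ an implementation constant) a block with round number $r'\le r$. Round $r$ has $k$ LBR-synchronized($\ell$) invocations if $k$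 honest parties invoke $LBR(r,\ell)$ after GST and their execution intervals share a common intersection of length at least $c\delta$. Guarantees: (Endorsement) if certified$(B,r)$ then $B$'s endorser set has $2f+1$ parties; (Agreement) any two certified blocks returned to honest parties by LBR satisfy $B\longrightarrow B'$ or $B'\longrightarrow B$; (Progress) if round $r$ has $k\ge 2f+1$ LBR-synchronized($\ell$) invocations and $\ell$ is honest, they all return a certified block with round number $r$ authored by $\ell$; (Blocking) if a non-Byzantine $\ell$ never invokes $LBR(r,\ell)$, no $LBR(r,\ell)$ invocation returns a certified block formed in round $r$; (Reputation) if a non-Byzantine $p$ never invokes LBR for round $r$, no certified block with round number $r$ has $p$ among its endorsers. Pacemaker: produces new_round$(r)$ notifications at honest parties for every $r$; if all new_round$(r)$ notifications at non-Byzantine parties occur after GST, the first at $T_f$ and last at $T_l$, then $T_l-T_f\le\delta$ and no non-Byzantine party receives new_round$(r+1)$ before $T_l+\Delta_p$, where $\Delta_p=\Delta_l$. A round $r$ occurs after GST if all new_round$(r)$ notifications at honest parties occur after GST. Algorithm 1 (party $p_i$): initially commit_head $:=$ genesis. Upon new_round$(r)$: leader $:=$ choose_leader$(r,$ commit_head$)$; $B:=LBR(r,\text{leader})$; if commit_head $\longrightarrow B$, commit $B$ (and all not-yet-committed blocks on its implied chain) and set commit_head $:=B$. Algorithm 2 (Carousel), choose_leader$(r,h)$: if the round number of $h$ is not $r-1$, return party $(r \bmod n)$ (round-robin mechanism). Otherwise let active be the endorser set of $h$; walking from $h$ along parent links, add block authors to last_authors while $|\text{last\_authors}|<f$ and the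 current block is not genesis; return a deterministically chosen element of active $\setminus$ last_authors (reputation mechanism). *)

(* Defs.v *)
From HB Require Import structures.
From mathcomp Require Import all_boot.
From Stdlib Require Import Reals.

Set Implicit Arguments.
Unset Strict Implicit.
Unset Printing Implicit Defensive.

Record system (n f : nat) := System {
  fault_bound : 3 * f < n;
  Block : eqType;
  genesis : Block;
  parent : Block -> Block;
  round : Block -> nat;
  author : Block -> 'I_n;
  endorsers : Block -> {set 'I_n};
  (* certified B : B carries a valid certificate for its round round B *)
  certified : Block -> Prop;
  parent_genesis : parent genesis = genesis;
  round_genesis : round genesis = 0;
  (* the implied chain goes back to genesis: parents have smaller rounds *)
  round_parent : forall B, B != genesis -> round (parent B) < round B;
  dchoice : {set 'I_n} -> 'I_n;
  dchoiceP : forall A : {set 'I_n}, A != set0 -> dchoice A \in A;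
  delta : R;
  delta_pos : Rlt R0 delta;
  c_impl : R;
  Delta_l : R;
  Delta_l_gt : Rlt (Rmult c_impl delta) Delta_l
}.

Arguments parent {n f} s _ : rename.
Arguments round {n f} s _ : rename.
Arguments author {n f} s _ : rename.
Arguments endorsers {n f} s _ : rename.
Arguments certified {n f} s _ : rename.
Arguments dchoice {n f} s _ : rename.

Section SystemDefs.
Variables (n f : nat) (S : system n f).

Definition on_chain (B B' : Block S) : Prop :=
  exists k : nat, iter k (parent S) B' = B.

Fixpoint walk (fuel : nat) (cur : Block S) (acc : {set 'I_n}) : {set 'I_n} :=
  match fuel with
  | 0 => acc
  | k.+1 =>
      if (#|acc| < f) && (cur != genesis S)
      then walk k (parent S cur) (author S cur |: acc)
      else acc
  end.

(* round strictly decreases along parent links, so (round h).+1 steps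
   suffice to reach genesis *)
Definition last_authors (h : Block S) : {set 'I_n} :=
  walk (round S h).+1 h set0.

Lemma n_gt0 : 0 < n.
Proof. have H := fault_bound S. by apply: leq_ltn_trans H. Qed.

Definition rr (j : nat) : 'I_n := Ordinal (ltn_pmod j n_gt0).

Definition choose_leader (r : nat) (h : Block S) : 'I_n :=
  if round S h != r.-1 then rr r
  else dchoice S (endorsers S h :\: last_authors h).

End SystemDefs.

(* An execution of Algorithm 1 with choose_leader = Carousel, over the *)
(* LBR and Pacemaker abstractions.  Rounds are 1, 2, 3, ...            *)
(*  handles p r   : p receives new_round(r) and runs its handler       *)
(*  nr_time p r   : time of that new_round(r) notification             *)
(*  head p r      : commit_head of p when its handler for r runs       *)
(*  invokes p r l : p invokes LBR(r, l)                                *)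
(*  returns p r   : the LBR invocation of p's handler for r returned,  *)
(*                  at time ret_time p r, with block ret p r           *)
(* Only the behaviour of non-Byzantine parties is constrained.         *)
Record execution (n f : nat) (S : system n f) := Execution {
  byz : {set 'I_n};
  crashed : {set 'I_n};
  byz_crashed_disj : [disjoint byz & crashed];
  faulty_bound : #|byz :|: crashed| <= f;
  GST : R;
  handles : 'I_n -> nat -> Prop;
  nr_time : 'I_n -> nat -> R;
  head : 'I_n -> nat -> Block S;
  invokes : 'I_n -> nat -> 'I_n -> Prop;
  returns : 'I_n -> nat -> Prop;
  ret : 'I_n -> nat -> Block S;
  ret_time : 'I_n -> nat -> R;

  handles_pos : forall p r, p \notin byz -> handles p r -> 0 < r;
  honest_handles : forall p r, p \notin byz :|: crashed -> 0 < r -> handles p r;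
  (* non-Byzantine parties process rounds in order until they (maybe) crash *)
  handles_prefix : forall p r, p \notin byz -> 0 < r -> handles p r.+1 -> handles p r;

  (* Algorithm 1: commit_head initially genesis, updated at the end of
     each round handler *)
  head_init : forall p, p \notin byz -> head p 1 = genesis S;
  head_step : forall p r, p \notin byz -> 0 < r -> handles p r.+1 ->
      returns p r /\
      (on_chain (head p r) (ret p r) -> head p r.+1 = ret p r) /\
      (~ on_chain (head p r) (ret p r) -> head p r.+1 = head p r);
  invokes_alg : forall p r l, p \notin byz -> invokes p r l ->
      handles p r /\ l = choose_leader r (head p r);
  invokes_honest : forall p r, p \notin byz :|: crashed -> handles p r ->
      invokes p r (choose_leader r (head p r));
  returns_invoked : forall p r, p \notin byz -> returns p r ->
      exists l, invokes p r l;

  honest_returns : forall p r, p \notin byz :|: crashed -> handles p r ->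
      returns p r;
  ret_timing : forall p r, p \notin byz -> returns p r ->
      Rle (nr_time p r) (ret_time p r) /\
      Rle (ret_time p r) (Rplus (nr_time p r) (Delta_l S));
  ret_round : forall p r, p \notin byz -> returns p r ->
      round S (ret p r) <= r /\ (certified S (ret p r) \/ ret p r = genesis S);
  endorse_via_lbr : forall p B, p \notin byz -> certified S B ->
      p \in endorsers S B -> invokes p (round S B) (author S B);
  lbr_endorsement : forall B, certified S B -> #|endorsers S B| = (2 * f).+1;
  lbr_agreement : forall p q r1 r2,
      p \notin byz :|: crashed -> q \notin byz :|: crashed ->
      returns p r1 -> returns q r2 ->
      certified S (ret p r1) -> certified S (ret q r2) ->
      on_chain (ret p r1) (ret q r2) \/ on_chain (ret q r2) (ret p r1);
  lbr_progress : forall r l (P : {set 'I_n}),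
      l \notin byz :|: crashed -> (2 * f).+1 <= #|P| ->
      (forall p, p \in P -> [/\ p \notin byz :|: crashed, invokes p r l &
                               Rle GST (nr_time p r)]) ->
      (exists a : R, forall p, p \in P ->
          Rle (nr_time p r) a /\
          Rle (Rplus a (Rmult (c_impl S) (delta S))) (ret_time p r)) ->
      forall p, p \in P ->
        [/\ certified S (ret p r), round S (ret p r) = r & author S (ret p r) = l];
  lbr_blocking : forall r l, l \notin byz -> ~ invokes l r l ->
      forall p, p \notin byz -> invokes p r l -> returns p r ->
      certified S (ret p r) -> round S (ret p r) <> r;
  lbr_reputation : forall p r, p \notin byz -> (forall l, ~ invokes p r l) ->
      forall B, certified S B -> round S B = r -> p \notin endorsers S B;
  (* Pacemaker timing (Delta_p = Delta_l) *)
  pacemaker : forall r,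
      (forall p, p \notin byz -> handles p r -> Rle GST (nr_time p r)) ->
      (forall p q, p \notin byz -> q \notin byz -> handles p r -> handles q r ->
          Rle (Rminus (nr_time p r) (nr_time q r)) (delta S)) /\
      (forall p q, p \notin byz -> q \notin byz -> handles p r -> handles q r.+1 ->
          Rle (Rplus (nr_time p r) (Delta_l S)) (nr_time q r.+1))
}.

Section ExecDefs.
Variables (n f : nat) (S : system n f) (E : execution S).

Definition honest (p : 'I_n) : Prop := p \notin byz E :|: crashed E.

Definition commits_in (p : 'I_n) (r : nat) (B : Block S) : Prop :=
  returns E p r /\ ret E p r = B /\ on_chain (head E p r) B.

Definition committed (B : Block S) : Prop :=
  exists p r B', honest p /\ commits_in p r B' /\ on_chain B B'.

Definition immediately_committed (B : Block S) : Prop :=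
  exists p, honest p /\ commits_in p (round S B) B.

Definition round_after_GST (r : nat) : Prop :=
  forall p, honest p -> Rle (GST E) (nr_time E p r).

End ExecDefs.

(* Main.v *)
Require Import Defs.
From HB Require Import structures.
From mathcomp Require Import all_boot.
From Stdlib Require Import Reals.
From Stdlib Require Import Classical.
From mathcomp Require Import zify.
Set Implicit Arguments.
Unset Strict Implicit.

Lemma iter_gen (n f : nat) (S : system n f) k :
  iter k (parent S) (genesis S) = genesis S.
Proof. elim: k => [//|k IH]; by rewrite iterS IH parent_genesis. Qed.

Lemma round_iter_le (n f : nat) (S : system n f) k (b : Block S) :
  round S (iter k (parent S) b) <= round S b.
Proof.
elim: k b => [//|k IH] b; rewrite iterSr.
apply: leq_trans (IH _) _.
case: (eqVneq b (genesis S)) => [->|nb]; first by rewrite parent_genesis.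
exact: ltnW (round_parent nb).
Qed.

Lemma round_iter_lt (n f : nat) (S : system n f) k (b : Block S) :
  0 < k -> b != genesis S -> round S (iter k (parent S) b) < round S b.
Proof.
case: k => [//|k] _ nb; rewrite iterSr.
by apply: (@leq_ltn_trans (round S (parent S b))); [exact: round_iter_le | exact: round_parent].
Qed.

Lemma on_chain_refl (n f : nat) (S : system n f) (b : Block S) : on_chain b b.
Proof. by exists 0. Qed.

Lemma on_chain_trans (n f : nat) (S : system n f) (a b c : Block S) :
  on_chain a b -> on_chain b c -> on_chain a c.
Proof. move=> [k1 H1] [k2 H2]; exists (k1 + k2); by rewrite iterD H2. Qed.

Lemma on_chain_round (n f : nat) (S : system n f) (a b : Block S) :
  on_chain a b -> round S a <= round S b.
Proof. move=> [k <-]; exact: round_iter_le. Qed.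

Lemma on_chain_gen (n f : nat) (S : system n f) (a : Block S) :
  on_chain a (genesis S) -> a = genesis S.
Proof. by move=> [k <-]; rewrite iter_gen. Qed.

Lemma on_chain_lin (n f : nat) (S : system n f) (x y c : Block S) :
  x != genesis S -> round S y <= round S x ->
  on_chain x c -> on_chain y c -> on_chain y x.
Proof.
move=> nx le [a Ha] [b Hb].
case: (leqP a b) => ab.
  exists (b - a); by rewrite -Ha -iterD subnK.
have Hy : iter (a - b) (parent S) y = x by rewrite -Hb -iterD subnK // ltnW.
have ny : y != genesis S.
  apply/eqP => ey; move: nx; by rewrite -Hy ey iter_gen eqxx.
have := @round_iter_lt _ _ S (a - b) y; rewrite Hy subn_gt0 => /(_ ab ny).
by rewrite ltnNge le.
Qed.

Lemma walk_card (n f : nat) (S : system n f) fuel (cur : Block S) (acc : {set 'I_n}) :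
  #|acc| <= f -> #|walk fuel cur acc| <= f.
Proof.
elim: fuel cur acc => [//|k IH] cur acc /= Hacc.
case: ifP => // /andP [H1 _]; apply: IH.
rewrite cardsU1; case: (_ \notin _) => /=; by [rewrite add1n | rewrite add0n].
Qed.

Lemma walk_bad (n f : nat) (S : system n f) (Bad : {set 'I_n})
  (X : seq (Block S)) r :
  0 < r -> size X = f -> uniq (map (author S) X) ->
  (forall x, x \in X -> r <= round S x) ->
  forall fuel cur (acc : {set 'I_n}), round S cur < fuel -> acc \subset Bad ->
  (forall b, on_chain b cur -> r <= round S b -> author S b \in Bad) ->
  (forall x, x \in X -> on_chain x cur \/ author S x \in acc) ->
  walk fuel cur acc \subset Bad /\ f <= #|walk fuel cur acc|.
Proof.
move=> r0 sX uX rX.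
have key : forall acc : {set 'I_n}, (forall x, x \in X -> author S x \in acc) ->
    f <= #|acc|.
  move=> acc H; rewrite -sX -(size_map (author S)) -(card_uniqP uX).
  apply: subset_leq_card; apply/subsetP => y /mapP [x xX ->]; exact: H.
elim=> [//|k IH] cur acc /= rc sub hb hx.
case: ifP => [/andP [lt ng]|Hc].
  have rcur : r <= round S cur.
    rewrite leqNgt; apply/negP => rlt.
    have : f <= #|acc|.
      apply: key => x xX; case: (hx x xX) => // /on_chain_round.
      move: (rX x xX) => a b; have := leq_trans a b; by rewrite leqNgt rlt.
    by rewrite leqNgt lt.
  apply: IH.
  - exact: leq_trans (round_parent ng) _.
  - rewrite subUset sub andbT sub1set; apply: hb => //; exact: on_chain_refl.
  - move=> b cb; apply: hb; apply: on_chain_trans cb _; by exists 1.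
  - move=> x xX; case: (hx x xX) => [[[|m] Hm]|H].
    + by right; rewrite -Hm /= setU11.
    + by left; exists m; rewrite -iterSr.
    + by right; rewrite setU1r.
split=> //.
move/negbT: Hc; rewrite negb_and negbK -leqNgt => /orP [//|/eqP eg].
apply: key => x xX; case: (hx x xX) => //; rewrite eg => /on_chain_gen ex.
move: (rX x xX); rewrite ex round_genesis leqNgt r0 //.
Qed.

Lemma head_form (n f : nat) (S : system n f) (E : execution S) q :
  q \notin byz E -> forall r, 0 < r -> handles E q r ->
  Defs.head E q r = genesis S \/ exists r0, returns E q r0 /\ Defs.head E q r = ret E q r0.
Proof.
move=> qb; elim=> [//|r IH] _ hr.
case: r IH hr => [|r] IH hr; first by left; exact: head_init.
have [ret1 [H1 H2]] := head_step qb (ltn0Sn r) hr.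
case: (classic (on_chain (Defs.head E q r.+1) (ret E q r.+1))) => Hc.
  by right; exists r.+1; split => //; exact: H1.
rewrite (H2 Hc); apply: IH => //; exact: handles_prefix.
Qed.

Lemma notbyz (n f : nat) (S : system n f) (E : execution S) p :
  p \notin byz E :|: crashed E -> p \notin byz E.
Proof. by rewrite in_setU negb_or => /andP []. Qed.

Theorem lemma7 (n f : nat) (Sy : system n f) (E : execution Sy) (r r' : nat) :
  0 < r -> r <= r' ->
  round_after_GST E r' ->
  honest E (rr Sy r') -> honest E (rr Sy r'.+1) ->
  (exists X : seq (Block Sy),
      size X = f /\ uniq (map (author Sy) X) /\
      (forall x, x \in X ->
         [/\ committed E x, r <= round Sy x < r' & author Sy x \in byz E])) ->
  forall B : Block Sy, immediately_committed E B ->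
    round Sy B = r' \/ round Sy B = r'.+1 ->
    exists B0 : Block Sy, on_chain B0 B /\ honest E (author Sy B0) /\
                         r <= round Sy B0 <= r'.+1.
Proof.
move=> r0 rr' _ hr1 hr2 [X [sX [uX HX]]] B [p [hp [retp [eB chp]]]] rB.
have rBge : r' <= round Sy B by case: rB => ->.
have rBle : round Sy B <= r'.+1 by case: rB => ->.
have rB0 : 0 < round Sy B by lia.
have nB : B != genesis Sy.
  by apply/eqP => eg; move: rB0; rewrite eg round_genesis.
have cB : certified Sy B.
  have [_ [|]] := ret_round (notbyz hp) retp; rewrite eB //.
  by move=> eg; move/eqP: nB.
have endo := lbr_endorsement E cB.
have [q qe qh] : exists2 q, q \in endorsers Sy B & q \notin byz E :|: crashed E.
  case: (boolP (endorsers Sy B \subset byz E :|: crashed E)) =>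
    [sub|/subsetPn [q ? ?]]; last by exists q.
  have := subset_leq_card sub; rewrite endo; have := faulty_bound E; lia.
have [hq al] := invokes_alg (notbyz qh) (endorse_via_lbr (notbyz qh) cB qe).
suff hB : honest E (author Sy B) \/
   exists B0 : Block Sy, on_chain B0 B /\ honest E (author Sy B0) /\
                         r <= round Sy B0 <= r'.+1.
  case: hB => // hB; exists B; split; [exact: on_chain_refl | split => //].
  apply/andP; split => //; lia.
move: al; rewrite /choose_leader.
case: (eqVneq (round Sy (Defs.head E q (round Sy B))) (round Sy B).-1)
  => [rh|nrh]; last first.
  by move=> ->; left; case: rB => ->.
rewrite /= => al.
case: (eqVneq (Defs.head E q (round Sy B)) (genesis Sy)) => [eh|nh].
  move: rh; rewrite eh round_genesis => rh.
  have r1 : round Sy B = 1 by lia.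
  have f0 : f = 0.
    case: X sX uX HX => [|x X'] sX _ HX; first by rewrite -sX.
    have [_ /andP [a b] _] := HX x (mem_head _ _); lia.
  left; rewrite /honest.
  have : #|byz E :|: crashed E| <= 0 by have := faulty_bound E; lia.
  rewrite leqn0 cards_eq0 => /eqP ->.
  by rewrite in_set0.
have [eh|[r2 [ret2 eh]]] := head_form (notbyz qh) rB0 hq.
  by move: nh; rewrite eh eqxx.
have cH : certified Sy (Defs.head E q (round Sy B)).
  have [_ [|]] := ret_round (notbyz qh) ret2; rewrite -eh //.
  by move=> eg; move: nh; rewrite eg eqxx.
have hB : on_chain (Defs.head E q (round Sy B)) B.
  have := lbr_agreement hp qh retp ret2; rewrite eB -eh => /(_ cB cH) [H|//].
  have := on_chain_round H; rewrite rh; lia.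
have hX : forall x, x \in X -> on_chain x (Defs.head E q (round Sy B)).
  move=> x xX.
  have [[p' [r3 [B' [hp' [[ret' [eB' _]] xB']]]]] /andP [rx1 rx2] _] := HX x xX.
  have [_] := ret_round (notbyz hp') ret'; rewrite eB' => -[cB'|gB'].
    have xB : on_chain x B.
      have := lbr_agreement hp hp' retp ret'; rewrite eB eB' => /(_ cB cB') [H|H].
        apply: (on_chain_lin nB) H xB'; lia.
      exact: on_chain_trans xB' H.
    apply: (on_chain_lin nh) hB xB; rewrite rh; lia.
  move: xB'; rewrite gB' => /on_chain_gen ex; move: rx1; rewrite ex round_genesis; lia.
case: (classic (exists b, on_chain b (Defs.head E q (round Sy B)) /\ r <= round Sy b
                         /\ honest E (author Sy b))) => [[b [bh [rb hb]]]|Hn].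
  right; exists b; split; first exact: on_chain_trans bh hB.
  split => //; have := on_chain_round bh; rewrite rh; lia.
have Hb : forall b, on_chain b (Defs.head E q (round Sy B)) -> r <= round Sy b ->
    author Sy b \in byz E :|: crashed E.
  move=> b bh rb; apply/negPn/negP => hb; apply: Hn; exists b; split => //.
have rX : forall x, x \in X -> r <= round Sy x.
  by move=> x xX; have [_ /andP [] ] := HX x xX.
have [sub card] := walk_bad r0 sX uX rX (ltnSn _) (sub0set _) Hb
                     (fun x xX => or_introl (hX x xX)).
have eqB : last_authors (Defs.head E q (round Sy B)) == byz E :|: crashed E.
  by rewrite eqEcard sub /=; apply: leq_trans (faulty_bound E) card.
have LAc : #|last_authors (Defs.head E q (round Sy B))| <= f.
  by apply: walk_card; rewrite cards0.
set h := Defs.head E q (round Sy B) in al eqB LAc cH.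
have ne : endorsers Sy h :\: last_authors h != set0.
  apply/eqP => e0; have := cardsD (endorsers Sy h) (last_authors h).
  rewrite e0 cards0 (lbr_endorsement E cH).
  have := subset_leq_card (subsetIr (endorsers Sy h) (last_authors h)); lia.
have := dchoiceP Sy ne; rewrite -al in_setD => /andP [nLA _].
by left; rewrite /honest -(eqP eqB).
Qed.
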